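(* Under the Setting below, let $\{x^k\}_{k\ge0}$ and $\{y^k\}_{k\ge1}$ be generated by Algorithm 1 with extrapolation weights satisfying $0\le\omega_k\le\omega<1$. Then: (1) $\{H(x^k)\}_{k\ge0}$ is non-increasing; (2) $\sum_{k=1}^\infty\|x^k-y^k\|^2<\infty$, in particular $\|x^k-y^k\|\to0$; (3) the index set $I(x^k)$ changes only finitely often, i.e. there is $k_0$ with $I(x^k)=I(x^{k_0})$ for all $k\ge k_0$; (4) $\sum_{k=1}^\infty\|x^k-x^{k-1}\|^2<\infty$, in particular $\|x^k-x^{k-1}\|\to0$.
   Context: Setting. Let $\lambda>0$, $l,u\in\mathbb{R}^n$ with $l\le u$ componentwise, $X=\{x\in\mathbb{R}^n: l\le x\le u\}$, and $\delta_X$ the indicator function of $X$ ($0$ on $X$, $+\infty$ outside). For $x\in\mathbb{R}^n$, $\|x\|_0$ is the number of nonzero components of $x$ and $I(x)=\{i: x_i=0\}$. Let $f:\mathbb{R}^n\to\mathbb{R}$ be convex and differentiable, bounded from below on $X$, with $\nabla f$ $L$-Lipschitz continuous on $X$ ($L>0$). Define $H(x)=\lambda\|x\|_0+f(x)+\delta_X(x)$. Algorithm 1. Choose $\mu>0$, extrapolation weights $0\le\omega_k\le\omega<1$, and a starting point $x^0\in X$; set $x^{-1}=x^0$. For $k=0,1,2,\dots$: define $y^{k+1}\in\mathbb{R}^n$ by $y^{k+1}_i=x^k_i+\omega_k(x^k_i-x^{k-1}_i)$ for $i\notin I(x^k)$ and $y^{k+1}_i=x^k_i\,(=0)$ for $i\in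 I(x^k)$ (extrapolation only on the support of $x^k$); if $\langle y^{k+1}-x^k,\nabla f(y^{k+1})\rangle>0$ or $y^{k+1}\notin X$, reset $y^{k+1}:=x^k$; then take any $$x^{k+1}\in\arg\min_{x\in X}\ \lambda\|x\|_0+\frac{L}{2}\Big\|x-y^{k+1}+\frac1L\nabla f(y^{k+1})\Big\|^2+\frac{\mu}{2}\|x-y^{k+1}\|^2 .$$ *)

(* Defs.v *)
(* Stdlib Reals.  Vectors of R^n are modelled as functions nat -> R
   whose components of index >= n vanish (see [inRn]). *)
From Stdlib Require Import Reals Lra Lia.
Open Scope R_scope.

Definition vec := nat -> R.

Fixpoint vsum (n : nat) (f : nat -> R) : R :=
  match n with O => 0 | S m => vsum m f + f m end.

Definition vadd (x y : vec) : vec := fun i => x i + y i.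
Definition vsub (x y : vec) : vec := fun i => x i - y i.
Definition vscal (a : R) (x : vec) : vec := fun i => a * x i.

Definition inner (n : nat) (x y : vec) : R := vsum n (fun i => x i * y i).
Definition norm2 (n : nat) (x : vec) : R := inner n x x.
Definition norm (n : nat) (x : vec) : R := sqrt (norm2 n x).

Definition inRn (n : nat) (x : vec) : Prop := forall i, (n <= i)%nat -> x i = 0.

Fixpoint l0 (n : nat) (x : vec) : nat :=
  match n with
  | O => O
  | S m => (l0 m x + (if Req_EM_T (x m) 0 then 0 else 1))%nat
  end.

Definition inX (n : nat) (l u : vec) (x : vec) : Prop :=
  inRn n x /\ forall i, (i < n)%nat -> l i <= x i <= u i.

Definition convex_on_Rn (n : nat) (f : vec -> R) : Prop :=
  forall x y t, inRn n x -> inRn n y -> 0 <= t <= 1 ->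
    f (vadd (vscal t x) (vscal (1 - t) y)) <= t * f x + (1 - t) * f y.

Definition has_gradient (n : nat) (f : vec -> R) (gradf : vec -> vec) : Prop :=
  forall x, inRn n x ->
    forall eps, 0 < eps -> exists delta, 0 < delta /\
      forall h, inRn n h -> norm n h < delta ->
        Rabs (f (vadd x h) - f x - inner n (gradf x) h) <= eps * norm n h.

Definition lipschitz_on_X (n : nat) (l u : vec) (gradf : vec -> vec) (L : R) : Prop :=
  forall x y, inX n l u x -> inX n l u y ->
    norm n (vsub (gradf x) (gradf y)) <= L * norm n (vsub x y).

(* H(x) = lam ||x||_0 + f(x) + delta_X(x), evaluated at points of X
   (where delta_X = 0); all iterates x^k lie in X. *)
Definition Hval (n : nat) (lam : R) (f : vec -> R) (x : vec) : R :=
  lam * INR (l0 n x) + f x.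

Definition subprob (n : nat) (lam L mu : R) (gradf : vec -> vec) (y x : vec) : R :=
  lam * INR (l0 n x)
  + L / 2 * norm2 n (vadd (vsub x y) (vscal (1 / L) (gradf y)))
  + mu / 2 * norm2 n (vsub x y).

Definition extrap (xk xkm1 : vec) (wk : R) : vec :=
  fun i => if Req_EM_T (xk i) 0 then xk i else xk i + wk * (xk i - xkm1 i).

(* x, y are sequences generated by Algorithm 1 with weights w (y 0 unused) *)
Definition Alg1 (n : nat) (l u : vec) (lam L mu : R) (gradf : vec -> vec)
    (w : nat -> R) (x y : nat -> vec) : Prop :=
  inX n l u (x 0%nat) /\
  forall k : nat,
    let xprev := match k with O => x 0%nat | S j => x j end in
    let yt := extrap (x k) xprev (w k) in
    let reset := inner n (vsub yt (x k)) (gradf yt) > 0 \/ ~ inX n l u yt in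
    (reset -> y (S k) = x k) /\
    (~ reset -> y (S k) = yt) /\
    inX n l u (x (S k)) /\
    (forall z, inX n l u z ->
       subprob n lam L mu gradf (y (S k)) (x (S k))
       <= subprob n lam L mu gradf (y (S k)) z).

(* Main.v *)
Require Import Defs.
From Stdlib Require Import Reals Lra Lia Psatz Classical FunctionalExtensionality.
Open Scope R_scope.

Lemma vsum_ext n F G : (forall i, (i < n)%nat -> F i = G i) -> vsum n F = vsum n G.
Proof. induction n; simpl; intros H; auto. rewrite IHn by (intros; apply H; lia). rewrite H by lia; auto. Qed.

Lemma vsum_le n F G : (forall i, (i < n)%nat -> F i <= G i) -> vsum n F <= vsum n G.
Proof. induction n; simpl; intros H; [lra|]. assert (H1 := IHn ltac:(intros; apply H; lia)). assert (H2 := H n ltac:(lia)). lra. Qed.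

Lemma vsum_plus n F G : vsum n (fun i => F i + G i) = vsum n F + vsum n G.
Proof. induction n; simpl; [lra|]. rewrite IHn; lra. Qed.

Lemma vsum_scal n c F : vsum n (fun i => c * F i) = c * vsum n F.
Proof. induction n; simpl; [lra|]. rewrite IHn; lra. Qed.

Lemma vsum_nonneg n F : (forall i, (i < n)%nat -> 0 <= F i) -> 0 <= vsum n F.
Proof. intros H. replace 0 with (vsum n (fun _ => 0)). apply vsum_le; auto. induction n; simpl; auto. rewrite IHn; try lra. intros; apply H; lia. Qed.

Lemma vsum_term n F i : (i < n)%nat -> (forall j, (j < n)%nat -> 0 <= F j) -> F i <= vsum n F.
Proof. induction n; simpl; intros Hi H; [lia|].
  assert (0 <= vsum n F) by (apply vsum_nonneg; intros; apply H; lia).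
  destruct (Nat.eq_dec i n). subst. lra.
  assert (F i <= vsum n F) by (apply IHn; [lia| intros; apply H; lia]).
  assert (0 <= F n) by (apply H; lia). lra. Qed.

Lemma vsum_update n F G i : (i < n)%nat -> (forall j, (j < n)%nat -> j <> i -> F j = G j) ->
  vsum n F - F i = vsum n G - G i.
Proof. induction n; simpl; intros Hi H; [lia|].
  destruct (Nat.eq_dec i n). subst.
  rewrite (vsum_ext n F G) by (intros; apply H; lia). lra.
  rewrite (H n) by lia. assert (E := IHn ltac:(lia) ltac:(intros; apply H; lia)). lra. Qed.

Lemma l0_le n a b : (forall i, (i < n)%nat -> a i = 0 -> b i = 0) -> (l0 n b <= l0 n a)%nat.
Proof. induction n; simpl; intros H; [lia|].
  assert (IH := IHn ltac:(intros; apply H; auto; lia)).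
  destruct (Req_EM_T (a n) 0) as [Ha|Ha]; destruct (Req_EM_T (b n) 0) as [Hb|Hb]; try lia.
  exfalso; apply Hb; apply H; auto. Qed.

Lemma l0_eq_incl n a b : (forall i, (i < n)%nat -> a i = 0 -> b i = 0) -> l0 n a = l0 n b ->
  forall i, (i < n)%nat -> b i = 0 -> a i = 0.
Proof. induction n; simpl; intros H E i Hi Hb; [lia|].
  assert (L := l0_le n a b ltac:(intros; apply H; auto; lia)).
  destruct (Req_EM_T (a n) 0) as [Ha|Ha]; destruct (Req_EM_T (b n) 0) as [Hb'|Hb'].
  - destruct (Nat.eq_dec i n). subst; auto. apply IHn; auto; try lia; intros; apply H; auto; lia.
  - exfalso; apply Hb'; apply H; auto.
  - destruct (Nat.eq_dec i n); subst; lia.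
  - destruct (Nat.eq_dec i n). subst. tauto. apply IHn; auto; try lia; intros; apply H; auto; lia.
Qed.

Lemma l0_update n x i : (i < n)%nat -> x i <> 0 ->
  l0 n x = S (l0 n (fun j => if Nat.eq_dec j i then 0 else x j)).
Proof. induction n; simpl; intros Hi Hx; [lia|].
  destruct (Nat.eq_dec n i).
  - subst. destruct (Req_EM_T (x i) 0); [tauto|].
    destruct (Req_EM_T 0 0); [|tauto].
    assert (l0 i x = l0 i (fun j => if Nat.eq_dec j i then 0 else x j)).
    { clear -i. assert (forall m, (m <= i)%nat -> l0 m x = l0 m (fun j => if Nat.eq_dec j i then 0 else x j)).
      induction m; simpl; auto. intros. rewrite IHm by lia. destruct (Nat.eq_dec m i); [lia|]. auto.
      apply H; lia. }
    rewrite <- H. destruct (Nat.eq_dec i i); [|tauto]. destruct (Req_EM_T 0 0); [|tauto]. lia.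
  - rewrite IHn; [|lia|auto]. simpl. destruct (Nat.eq_dec n i); [lia|]. destruct (Req_EM_T (x n) 0); lia.
Qed.

Lemma inner_scal_r n a d h : inner n a (vscal h d) = h * inner n a d.
Proof. unfold inner, vscal. rewrite <- vsum_scal. apply vsum_ext; intros; ring. Qed.

Lemma norm2_scal n h d : norm2 n (vscal h d) = h^2 * norm2 n d.
Proof. unfold norm2, inner, vscal. rewrite <- vsum_scal. apply vsum_ext; intros; ring. Qed.

Lemma norm2_nonneg n d : 0 <= norm2 n d.
Proof. apply vsum_nonneg; intros. nra. Qed.

Lemma norm_scal n h d : norm n (vscal h d) = Rabs h * norm n d.
Proof. unfold norm. rewrite norm2_scal. rewrite sqrt_mult_alt.
  rewrite <- Rsqr_pow2, sqrt_Rsqr_abs; auto. apply pow2_ge_0. Qed.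

Lemma inRn_vadd n a b : inRn n a -> inRn n b -> inRn n (vadd a b).
Proof. unfold inRn, vadd; intros Ha Hb i Hi; rewrite Ha, Hb; auto; lra. Qed.
Lemma inRn_vsub n a b : inRn n a -> inRn n b -> inRn n (vsub a b).
Proof. unfold inRn, vsub; intros Ha Hb i Hi; rewrite Ha, Hb; auto; lra. Qed.
Lemma inRn_vscal n c a : inRn n a -> inRn n (vscal c a).
Proof. unfold inRn, vscal; intros Ha i Hi; rewrite Ha; auto; lra. Qed.

Lemma phi_deriv n f gradf y d t : has_gradient n f gradf -> inRn n y -> inRn n d ->
  derivable_pt_lim (fun s => f (vadd y (vscal s d))) t (inner n (gradf (vadd y (vscal t d))) d).
Proof.
  intros Hg Hy Hd eps Heps.
  set (p := vadd y (vscal t d)).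
  assert (Hp : inRn n p) by (apply inRn_vadd; auto; apply inRn_vscal; auto).
  set (K := norm n d).
  assert (HK : 0 <= K) by apply sqrt_pos.
  destruct (Hg p Hp (eps/2/(K+1))) as [delta [Hdel Hb]].
  { apply Rdiv_lt_0_compat; lra. }
  assert (Hpos : 0 < delta / (K+1)) by (apply Rdiv_lt_0_compat; lra).
  exists (mkposreal _ Hpos). intros h Hh0 Hh. simpl in Hh.
  assert (E : vadd y (vscal (t+h) d) = vadd p (vscal h d)).
  { apply functional_extensionality; intro i; unfold p, vadd, vscal; ring. }
  rewrite E. fold p.
  assert (Hn : norm n (vscal h d) < delta).
  { rewrite norm_scal. fold K. apply (Rmult_lt_compat_r (K+1)) in Hh; [|lra].
    unfold Rdiv in Hh. rewrite Rmult_assoc, Rinv_l in Hh by lra.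
    assert (0 <= Rabs h) by apply Rabs_pos. nra. }
  specialize (Hb (vscal h d) (inRn_vscal _ _ _ Hd) Hn).
  rewrite inner_scal_r, norm_scal in Hb. fold K in Hb.
  set (A := f (vadd p (vscal h d)) - f p) in *.
  set (D := inner n (gradf p) d) in *.
  replace (A / h - D) with ((A - h * D) * / h) by (field; auto).
  rewrite Rabs_mult, Rabs_inv.
  assert (Hah : 0 < Rabs h) by (apply Rabs_pos_lt; auto).
  replace (f (vadd p (vscal h d)) - f p - h * D) with (A - h*D) in Hb by (unfold A; ring).
  apply (Rmult_le_compat_r (/ Rabs h)) in Hb; [|left; apply Rinv_0_lt_compat; auto].
  replace (eps / 2 / (K + 1) * (Rabs h * K) * / Rabs h) with (eps / 2 * (K / (K+1))) in Hb
    by (field; lra).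
  assert (K / (K+1) < 1). { apply (Rmult_lt_reg_r (K+1)); [lra|]. unfold Rdiv. rewrite Rmult_assoc, Rinv_l; lra. }
  assert (0 <= K / (K+1)) by (unfold Rdiv; apply Rmult_le_pos; [lra| left; apply Rinv_0_lt_compat; lra]).
  nra.
Qed.

Lemma vadd0 y d : vadd y (vscal 0 d) = y.
Proof. apply functional_extensionality; intro i; unfold vadd, vscal; ring. Qed.

Lemma grad_ineq n f gradf x y : convex_on_Rn n f -> has_gradient n f gradf ->
  inRn n x -> inRn n y -> f y + inner n (gradf y) (vsub x y) <= f x.
Proof.
  intros Hc Hg Hx Hy.
  set (d := vsub x y).
  assert (Hd : inRn n d) by (apply inRn_vsub; auto).
  assert (Hder := phi_deriv n f gradf y d 0 Hg Hy Hd).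
  rewrite vadd0 in Hder.
  set (D := inner n (gradf y) d) in *.
  assert (Hcv : forall t, 0 <= t <= 1 -> f (vadd y (vscal t d)) <= t * f x + (1-t) * f y).
  { intros t Ht. replace (vadd y (vscal t d)) with (vadd (vscal t x) (vscal (1-t) y)).
    apply Hc; auto. apply functional_extensionality; intro i; unfold d, vadd, vscal, vsub; ring. }
  destruct (Rle_or_lt (f y + D) (f x)) as [H|H]; auto. exfalso.
  destruct (Hder (f y + D - f x)) as [del Hdel]; [lra|].
  set (h := Rmin (del/2) (1/2)).
  assert (Hh : 0 < h) by (unfold h; apply Rmin_glb_lt; [destruct del; simpl; lra|lra]).
  assert (Hh1 : h <= 1/2) by apply Rmin_r.
  assert (Hh2 : h <= del/2) by apply Rmin_l.
  specialize (Hdel h ltac:(lra) ltac:(rewrite Rabs_right; destruct del; simpl in *; lra)).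
  rewrite Rplus_0_l, vadd0 in Hdel.
  specialize (Hcv h ltac:(lra)).
  assert (Q : (f (vadd y (vscal h d)) - f y) / h <= f x - f y).
  { apply (Rmult_le_reg_r h); auto. unfold Rdiv. rewrite Rmult_assoc, Rinv_l; lra. }
  apply Rabs_def2 in Hdel. lra.
Qed.

Lemma young n a b s : 0 < s -> inner n a b <= s/2 * norm2 n a + /(2*s) * norm2 n b.
Proof. intros Hs. unfold norm2, inner. rewrite <- !vsum_scal, <- vsum_plus.
  apply vsum_le; intros i _.
  assert (0 <= (s * a i - b i)^2) by apply pow2_ge_0.
  assert (E : s / 2 * (a i * a i) + / (2 * s) * (b i * b i) - a i * b i = (s * a i - b i)^2 / (2*s))
    by (field; lra).
  assert (0 <= (s * a i - b i)^2 / (2*s)) by (apply Rmult_le_pos; [auto| left; apply Rinv_0_lt_compat; lra]).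
  lra. Qed.

Lemma sq_of_sqrt_le A B L : 0 <= A -> 0 <= B -> 0 < L -> sqrt A <= L * sqrt B -> A <= L^2 * B.
Proof. intros HA HB HL H. assert (0 <= sqrt A) by apply sqrt_pos.
  assert (E1 := sqrt_sqrt A HA). assert (E2 := sqrt_sqrt B HB). nra. Qed.

Lemma lip2 n l u gradf L a b : lipschitz_on_X n l u gradf L -> 0 < L -> inX n l u a -> inX n l u b ->
  norm2 n (vsub (gradf a) (gradf b)) <= L^2 * norm2 n (vsub a b).
Proof. intros H HL Ha Hb. apply sq_of_sqrt_le; auto using norm2_nonneg. apply H; auto. Qed.

Lemma inX_seg n l u x y t : inX n l u x -> inX n l u y -> 0 <= t <= 1 ->
  inX n l u (vadd y (vscal t (vsub x y))).
Proof. intros [Hx1 Hx2] [Hy1 Hy2] Ht. split.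
  - apply inRn_vadd; auto. apply inRn_vscal, inRn_vsub; auto.
  - intros i Hi. specialize (Hx2 i Hi); specialize (Hy2 i Hi). unfold vadd, vscal, vsub. nra. Qed.

Lemma descent n l u f gradf L x y : has_gradient n f gradf -> lipschitz_on_X n l u gradf L -> 0 < L ->
  inX n l u x -> inX n l u y ->
  f x <= f y + inner n (gradf y) (vsub x y) + L/2 * norm2 n (vsub x y).
Proof.
  intros Hg Hl HL Hx Hy.
  set (d := vsub x y).
  assert (Hd : inRn n d) by (apply inRn_vsub; [apply Hx|apply Hy]).
  set (p := fun t => vadd y (vscal t d)).
  set (D := fun t => inner n (gradf (p t)) d).
  set (N := norm2 n d).
  set (K := L/2 * N).
  assert (Hder : forall c, derivable_pt_lim
     ((fun t => f (vadd y (vscal t d))) - (mult_real_fct (D 0) id + mult_real_fct K (id * id)))%F c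
     (D c - (D 0 * 1 + K * (1 * id c + id c * 1)))).
  { intro c. apply derivable_pt_lim_minus. apply phi_deriv; auto. apply Hy.
    apply derivable_pt_lim_plus; apply derivable_pt_lim_scal; auto using derivable_pt_lim_id.
    apply derivable_pt_lim_mult; apply derivable_pt_lim_id. }
  destruct (MVT_cor2 _ _ 0 1 Rlt_0_1 (fun c _ => Hder c)) as [c [Ec Hc]].
  unfold minus_fct, plus_fct, mult_real_fct, mult_fct, id in Ec.
  rewrite vadd0 in Ec.
  replace (vadd y (vscal 1 d)) with x in Ec
    by (apply functional_extensionality; intro i; unfold d, vadd, vscal, vsub; ring).
  assert (HD0 : D 0 = inner n (gradf y) d) by (unfold D, p; rewrite vadd0; auto).
  assert (Hpc : inX n l u (p c)) by (apply inX_seg; auto; lra).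
  assert (Hp0 : inX n l u (p 0)) by (apply inX_seg; auto; lra).
  assert (E1 : D c - D 0 = inner n (vsub (gradf (p c)) (gradf (p 0))) d).
  { unfold D, inner. rewrite <- (Rmult_1_l (vsum n (fun i => gradf (p 0) i * d i))).
    rewrite <- vsum_scal. replace (vsum n (fun i => gradf (p c) i * d i) - vsum n (fun i => 1 * (gradf (p 0) i * d i)))
      with (vsum n (fun i => gradf (p c) i * d i) + vsum n (fun i => (-1) * (gradf (p 0) i * d i)))
      by (rewrite !vsum_scal; ring).
    rewrite <- vsum_plus. apply vsum_ext; intros; unfold vsub; ring. }
  assert (E2 : norm2 n (vsub (p c) (p 0)) = c^2 * N).
  { unfold N. rewrite <- norm2_scal. unfold norm2, inner. apply vsum_ext; intros; unfold p, vsub, vadd, vscal; ring. }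
  assert (HL2 := lip2 n l u gradf L (p c) (p 0) Hl HL Hpc Hp0). rewrite E2 in HL2.
  assert (HY := young n (vsub (gradf (p c)) (gradf (p 0))) d (/(L*c)) ltac:(apply Rinv_0_lt_compat; nra)).
  fold N in HY. rewrite <- E1 in HY.
  assert (HN : 0 <= N) by apply norm2_nonneg.
  assert (B1 : / (L * c) / 2 * norm2 n (vsub (gradf (p c)) (gradf (p 0))) <= /(L*c)/2 * (L^2 * (c^2 * N))).
  { apply Rmult_le_compat_l; auto. left; apply Rmult_lt_0_compat; [apply Rinv_0_lt_compat; nra|lra]. }
  replace (/ (L * c) / 2 * (L ^ 2 * (c ^ 2 * N))) with (L * c / 2 * N) in B1 by (field; nra).
  replace (/ (2 * / (L * c))) with (L*c/2) in HY by (field; nra).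
  assert (B2 : D c - D 0 <= L * c * N) by lra.
  rewrite <- HD0. fold N. unfold K in Ec.
  unfold K. assert (X : f x - f y - D 0 - L/2*N = (D c - D 0) - L*c*N). { transitivity ((D c - (D 0 * 1 + L / 2 * N * (1 * c + c * 1))) * (1 - 0)); [rewrite <- Ec|]; field. } lra.
Qed.

Lemma vsum_zero n : vsum n (fun _ => 0) = 0.
Proof. induction n; simpl; auto. rewrite IHn; ring. Qed.

Lemma norm2_self n a : norm2 n (vsub a a) = 0.
Proof. unfold norm2, inner, vsub. rewrite <- (vsum_zero n). apply vsum_ext; intros; ring. Qed.

Lemma series_bounded (a : nat -> R) B : (forall j, 0 <= a j) -> (forall N, sum_f_R0 a N <= B) ->
  exists s, infinite_sum a s.
Proof. intros Ha HB.
  assert (G : Un_growing (sum_f_R0 a)) by (intro m; simpl; specialize (Ha (S m)); lra).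
  assert (U : has_ub (sum_f_R0 a)).
  { exists B. intros z [i ->]. auto. }
  destruct (growing_cv _ G U) as [s Hs]. exists s. exact Hs. Qed.

Lemma terms_to_0 (a : nat -> R) s : infinite_sum a s -> Un_cv a 0.
Proof. intros H eps Heps. destruct (H (eps/2)) as [N HN]; [lra|].
  exists (S N). intros m Hm. destruct m; [lia|].
  assert (H1 := HN m ltac:(lia)). assert (H2 := HN (S m) ltac:(lia)).
  unfold R_dist in *. simpl in H2.
  replace (a (S m) - 0) with ((sum_f_R0 a m + a (S m) - s) - (sum_f_R0 a m - s)) by ring.
  eapply Rle_lt_trans; [apply Rabs_triang|]. rewrite Rabs_Ropp. lra. Qed.

Lemma sqrt_cv0 (b : nat -> R) : (forall j, 0 <= b j) -> Un_cv b 0 -> Un_cv (fun j => sqrt (b j)) 0.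
Proof. intros Hb H eps Heps. destruct (H (eps*eps)) as [N HN]; [nra|].
  exists N. intros m Hm. specialize (HN m Hm). unfold R_dist in *.
  rewrite Rminus_0_r in *. rewrite Rabs_right in HN by (specialize (Hb m); lra).
  rewrite Rabs_right by (apply Rle_ge, sqrt_pos).
  rewrite <- (sqrt_square eps) by lra. apply sqrt_lt_1_alt. split; auto. Qed.

Lemma nat_stab (s : nat -> nat) K : (forall k, (K <= k)%nat -> (s (S k) <= s k)%nat) ->
  exists k0, (K <= k0)%nat /\ forall k, (k0 <= k)%nat -> s k = s k0.
Proof.
  intros H.
  assert (Hm : forall k j, (K <= k)%nat -> (k <= j)%nat -> (s j <= s k)%nat).
  { intros k j Hk Hj. induction Hj; auto. specialize (H m ltac:(lia)). lia. }
  assert (forall m k, (K <= k)%nat -> (s k <= m)%nat -> exists k0, (K <= k0)%nat /\ forall j, (k0 <= j)%nat -> s j = s k0).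
  { induction m; intros k Hk Hs.
    - exists k; split; auto. intros j Hj. specialize (Hm k j Hk Hj). lia.
    - destruct (classic (forall j, (k <= j)%nat -> s j = s k)) as [A|A].
      + exists k; split; auto.
      + apply not_all_ex_not in A. destruct A as [j A].
        apply imply_to_and in A. destruct A as [Hj A].
        apply (IHm j); [lia|]. specialize (Hm k j Hk Hj). lia. }
  apply (H0 (s K) K); auto. Qed.

Lemma sqineq p r q : 0 < q < 1 -> (p + r)^2 <= p^2/(1-q) + r^2/q.
Proof. intros Hq.
  assert (E : p^2/(1-q) + r^2/q - (p+r)^2 = (q*p - (1-q)*r)^2 / (q*(1-q))) by (field; lra).
  assert (0 <= (q*p - (1-q)*r)^2 / (q*(1-q))).
  { apply Rmult_le_pos; [apply pow2_ge_0| left; apply Rinv_0_lt_compat; nra]. }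
  lra. Qed.

Definition Fc (lam L mu : R) (g yk v : vec) (j : nat) : R :=
  L/2 * ((v j - yk j + 1/L * g j) * (v j - yk j + 1/L * g j)) + mu/2 * ((v j - yk j) * (v j - yk j)).

Lemma subprob_eq n lam L mu gradf yk v :
  subprob n lam L mu gradf yk v = lam * INR (l0 n v) + vsum n (Fc lam L mu (gradf yk) yk v).
Proof. unfold subprob, norm2, inner, Fc. rewrite Rplus_assoc. f_equal.
  rewrite <- !vsum_scal, <- vsum_plus. apply vsum_ext; intros; unfold vadd, vsub, vscal; ring. Qed.

Lemma main_facts
  (n : nat) (lam : R) (l u : vec) (f : vec -> R) (gradf : vec -> vec) (L : R)
  (mu wbar : R) (w : nat -> R) (x y : nat -> vec)
  (Hlam : 0 < lam)
  (Hconv : convex_on_Rn n f)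
  (Hgrad : has_gradient n f gradf)
  (HL : 0 < L)
  (HLip : lipschitz_on_X n l u gradf L)
  (Hmu : 0 < mu)
  (Hw : forall k, 0 <= w k <= wbar)
  (Halg : Alg1 n l u lam L mu gradf w x y) :
  (forall k, inX n l u (x k)) /\
  (forall k, inX n l u (y (S k)) /\ (forall i, (i < n)%nat -> x k i = 0 -> y (S k) i = 0) /\
     norm2 n (vsub (y (S k)) (x k)) <= (w k)^2 * norm2 n (vsub (x k) (match k with O => x 0%nat | S j => x j end)) /\
     f (y (S k)) <= f (x k) /\ (l0 n (y (S k)) <= l0 n (x k))%nat).
Proof.
  destruct Halg as [Hx0 Halg].
  assert (HX : forall k, inX n l u (x k)) by (intros [|k]; [auto| apply (Halg k)]).
  split; auto. intro k.
  destruct (Halg k) as [Hr [Hnr [Hxs Hmin]]]. cbv zeta in Hr, Hnr.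
  set (xp := match k with O => x 0%nat | S j => x j end) in *.
  set (yt := extrap (x k) xp (w k)) in *.
  destruct (classic (inner n (vsub yt (x k)) (gradf yt) > 0 \/ ~ inX n l u yt)) as [R|R].
  - rewrite (Hr R). split; auto. split; auto. split.
    + rewrite norm2_self. assert (0 <= norm2 n (vsub (x k) xp)) by apply norm2_nonneg.
      assert (0 <= w k ^2) by apply pow2_ge_0. nra.
    + split; lra || lia.
  - rewrite (Hnr R). apply not_or_and in R. destruct R as [R1 R2]. apply NNPP in R2.
    assert (Z : forall i, (i < n)%nat -> x k i = 0 -> yt i = 0).
    { intros i _ Hi. unfold yt, extrap. destruct (Req_EM_T (x k i) 0); auto. tauto. }
    split; auto. split; auto. split; [|split].
    + unfold norm2, inner. rewrite <- vsum_scal. apply vsum_le; intros i _. unfold vsub, yt, extrap. destruct (Req_EM_T (x k i) 0). nra. replace (x k i + w k * (x k i - xp i) - x k i) with (w k * (x k i - xp i)) by ring. nra.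
    + assert (Gi := grad_ineq n f gradf (x k) yt Hconv Hgrad (proj1 (HX k)) (proj1 R2)).
      assert (E : inner n (gradf yt) (vsub (x k) yt) = - inner n (vsub yt (x k)) (gradf yt)).
      { unfold inner. replace (- vsum n (fun i => vsub yt (x k) i * gradf yt i)) with ((-1) * vsum n (fun i => vsub yt (x k) i * gradf yt i)) by ring. rewrite <- vsum_scal.
        apply vsum_ext; intros; unfold vsub; ring. }
      lra.
    + apply l0_le; auto.
Qed.

Lemma step_desc
  (n : nat) (lam : R) (l u : vec) (f : vec -> R) (gradf : vec -> vec) (L : R)
  (mu wbar : R) (w : nat -> R) (x y : nat -> vec)
  (Hlam : 0 < lam)
  (Hconv : convex_on_Rn n f)
  (Hgrad : has_gradient n f gradf)
  (HL : 0 < L)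
  (HLip : lipschitz_on_X n l u gradf L)
  (Hmu : 0 < mu)
  (Hw : forall k, 0 <= w k <= wbar)
  (Halg : Alg1 n l u lam L mu gradf w x y) k :
  Hval n lam f (x (S k)) + mu/2 * norm2 n (vsub (x (S k)) (y (S k))) <= Hval n lam f (x k).
Proof.
  destruct (main_facts n lam l u f gradf L mu wbar w x y Hlam Hconv Hgrad HL HLip Hmu Hw Halg) as [HX HY].
  destruct (HY k) as [Hyk [_ [_ [Hf Hl0]]]].
  destruct Halg as [_ Halg]. destruct (Halg k) as [_ [_ [_ Hmin]]].
  specialize (Hmin (y (S k)) Hyk).
  set (yk := y (S k)) in *. set (x' := x (S k)) in *. set (g := gradf yk).
  assert (Id : L/2 * norm2 n (vadd (vsub x' yk) (vscal (1/L) g)) =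
     L/2 * norm2 n (vsub x' yk) + inner n g (vsub x' yk) + L/2 * norm2 n (vadd (vsub yk yk) (vscal (1/L) g))).
  { unfold norm2, inner. rewrite <- !vsum_scal, <- !vsum_plus. apply vsum_ext; intros.
    unfold vadd, vsub, vscal. field. lra. }
  assert (Ds := descent n l u f gradf L x' yk Hgrad HLip HL (HX (S k)) Hyk).
  unfold subprob in Hmin. rewrite norm2_self in Hmin. fold g in Hmin, Ds.
  apply le_INR in Hl0.
  unfold Hval. nra.
Qed.

Theorem lemma2p5
  (n : nat) (lam : R) (l u : vec) (f : vec -> R) (gradf : vec -> vec) (L : R)
  (mu wbar : R) (w : nat -> R) (x y : nat -> vec)
  (Hlam : 0 < lam)
  (Hlu : forall i, (i < n)%nat -> l i <= u i)
  (Hconv : convex_on_Rn n f)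
  (Hgrad : has_gradient n f gradf)
  (Hbdd : exists m, forall z, inX n l u z -> m <= f z)
  (HL : 0 < L)
  (HLip : lipschitz_on_X n l u gradf L)
  (Hmu : 0 < mu)
  (Hw : forall k, 0 <= w k <= wbar)
  (Hwbar : wbar < 1)
  (Halg : Alg1 n l u lam L mu gradf w x y) :
  (* (1) *)
  (forall k, Hval n lam f (x (S k)) <= Hval n lam f (x k)) /\
  (* (2) *)
  ((exists s, infinite_sum (fun j => norm2 n (vsub (x (S j)) (y (S j)))) s) /\
   Un_cv (fun j => norm n (vsub (x (S j)) (y (S j)))) 0) /\
  (* (3) *)
  (exists k0, forall k, (k0 <= k)%nat ->
     forall i, (i < n)%nat -> (x k i = 0 <-> x k0 i = 0)) /\
  (* (4) *)
  ((exists s, infinite_sum (fun j => norm2 n (vsub (x (S j)) (x j))) s) /\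
   Un_cv (fun j => norm n (vsub (x (S j)) (x j))) 0).
Proof.
  assert (Hst := step_desc n lam l u f gradf L mu wbar w x y Hlam Hconv Hgrad HL HLip Hmu Hw Halg).
  destruct (main_facts n lam l u f gradf L mu wbar w x y Hlam Hconv Hgrad HL HLip Hmu Hw Halg) as [HX HY].
  set (b := fun j => norm2 n (vsub (x (S j)) (y (S j)))).
  assert (Hb0 : forall j, 0 <= b j) by (intro; apply norm2_nonneg).
  destruct Hbdd as [m Hm].
  assert (HH : forall k, m <= Hval n lam f (x k)).
  { intro k. unfold Hval. assert (0 <= INR (l0 n (x k))) by apply pos_INR. specialize (Hm _ (HX k)). nra. }
  assert (Hsum : forall N, sum_f_R0 b N <= 2/mu * (Hval n lam f (x 0%nat) - Hval n lam f (x (S N)))).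
  { induction N; simpl.
    - specialize (Hst 0%nat). unfold b. apply (Rmult_le_reg_l (mu/2)); [lra|].
      replace (mu / 2 * (2 / mu * (Hval n lam f (x 0%nat) - Hval n lam f (x 1%nat)))) with
        (Hval n lam f (x 0%nat) - Hval n lam f (x 1%nat)) by (field; lra). lra.
    - specialize (Hst (S N)). fold (b (S N)) in Hst.
      assert (E : 2 / mu * (Hval n lam f (x 0%nat) - Hval n lam f (x (S (S N)))) =
         2 / mu * (Hval n lam f (x 0%nat) - Hval n lam f (x (S N))) + 2/mu * (Hval n lam f (x (S N)) - Hval n lam f (x (S (S N))))) by ring.
      rewrite E. assert (b (S N) <= 2/mu * (Hval n lam f (x (S N)) - Hval n lam f (x (S (S N))))).
      { apply (Rmult_le_reg_l (mu/2)); [lra|].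
        replace (mu / 2 * (2 / mu * (Hval n lam f (x (S N)) - Hval n lam f (x (S (S N)))))) with
          (Hval n lam f (x (S N)) - Hval n lam f (x (S (S N)))) by (field; lra). lra. }
      lra. }
  assert (Hser : exists s, infinite_sum b s).
  { apply (series_bounded b (2/mu * (Hval n lam f (x 0%nat) - m))); auto.
    intro N. eapply Rle_trans; [apply Hsum|]. apply Rmult_le_compat_l. 
    unfold Rdiv; apply Rmult_le_pos; [lra| left; apply Rinv_0_lt_compat; lra].
    specialize (HH (S N)). lra. }
  assert (Hbcv : Un_cv b 0) by (destruct Hser as [s Hs]; exact (terms_to_0 b s Hs)).
  split. { intro k; specialize (Hst k); specialize (Hb0 k). assert (0 <= mu/2 * b k) by (apply Rmult_le_pos; lra). unfold b in *; lra. }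
  split; [split; [exact Hser| exact (sqrt_cv0 b Hb0 Hbcv)]|].
  split.
  - set (V := vsum n (fun i => (u i - l i)^2)).
    set (G2 := 2 * L^2 * V + 2 * norm2 n (gradf (x 0%nat))).
    assert (HV : 0 <= V) by (apply vsum_nonneg; intros; apply pow2_ge_0).
    assert (HG2 : 0 <= G2).
    { unfold G2. assert (0 <= norm2 n (gradf (x 0%nat))) by apply norm2_nonneg.
      assert (0 <= L^2 * V) by (apply Rmult_le_pos; auto; apply pow2_ge_0). lra. }
    assert (HG : forall k i, (i < n)%nat -> (gradf (y (S k)) i)^2 <= G2).
    { intros k i Hi. destruct (HY k) as [Hyk _].
      assert (A3 := lip2 n l u gradf L (y (S k)) (x 0%nat) HLip HL Hyk (HX 0%nat)).
      set (g := gradf (y (S k))) in *. set (g0 := gradf (x 0%nat)) in *.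
      assert (A1 : g i ^2 <= norm2 n g).
      { unfold norm2, inner. replace (g i ^2) with (g i * g i) by ring.
        apply (vsum_term n (fun j => g j * g j)); auto; intros; nra. }
      assert (A2 : norm2 n g <= 2 * norm2 n (vsub g g0) + 2 * norm2 n g0).
      { unfold norm2, inner. rewrite <- !vsum_scal, <- vsum_plus. apply vsum_le; intros j _; cbv beta; unfold vsub. assert (0 <= (g j - 2 * g0 j)^2) by apply pow2_ge_0. nra. }
      assert (A4 : norm2 n (vsub (y (S k)) (x 0%nat)) <= V).
      { unfold norm2, inner, V. apply vsum_le; intros j Hj. destruct Hyk as [_ H1].
        destruct (HX 0%nat) as [_ H2]. specialize (H1 j Hj); specialize (H2 j Hj). unfold vsub. nra. }
      assert (A5 : L^2 * norm2 n (vsub (y (S k)) (x 0%nat)) <= L^2 * V)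
        by (apply Rmult_le_compat_l; auto; apply pow2_ge_0).
      unfold G2. fold g0. lra. }
    assert (HT : forall k i, (i < n)%nat -> x k i = 0 -> x (S k) i <> 0 -> lam^2 <= G2 * b k).
    { intros k i Hi Hz0 Hnz.
      destruct (HY k) as [Hyk [Hzero _]].
      assert (Hyi : y (S k) i = 0) by auto.
      destruct Halg as [_ Halg']. destruct (Halg' k) as [_ [_ [_ Hmin]]].
      assert (HzX : inX n l u (fun j => if Nat.eq_dec j i then 0 else x (S k) j)).
      { split.
        - intros j Hj. destruct (Nat.eq_dec j i); auto. apply (proj1 (HX (S k))); auto.
        - intros j Hj. destruct (Nat.eq_dec j i).
          + subst. destruct (HX k) as [_ Hb]. specialize (Hb i Hj). rewrite Hz0 in Hb. auto.
          + apply (proj2 (HX (S k))); auto. }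
      specialize (Hmin _ HzX). rewrite !subprob_eq in Hmin.
      rewrite (l0_update n (x (S k)) i Hi Hnz) in Hmin. rewrite S_INR in Hmin.
      set (z := fun j => if Nat.eq_dec j i then 0 else x (S k) j) in *.
      set (x' := x (S k)) in *. set (yk := y (S k)) in *.
      assert (U := vsum_update n (Fc lam L mu (gradf yk) yk x') (Fc lam L mu (gradf yk) yk z) i Hi
        (fun j Hj Hji => ltac:(unfold Fc, z; destruct (Nat.eq_dec j i); [contradiction| reflexivity]))).
      set (t := x' i). set (gi := gradf yk i).
      assert (Ex : Fc lam L mu (gradf yk) yk x' i = L/2*((t + 1/L*gi)*(t+1/L*gi)) + mu/2*(t*t))
        by (unfold Fc; fold t gi; rewrite Hyi; ring).
      assert (Ez : Fc lam L mu (gradf yk) yk z i = L/2*((1/L*gi)*(1/L*gi))).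
      { unfold Fc, z. destruct (Nat.eq_dec i i); [|tauto]. fold gi. rewrite Hyi; ring. }
      assert (Hk1 : lam + Fc lam L mu (gradf yk) yk x' i <= Fc lam L mu (gradf yk) yk z i) by lra.
      rewrite Ex, Ez in Hk1.
      assert (E2 : L/2*((t + 1/L*gi)*(t+1/L*gi)) = L/2*(t*t) + gi*t + L/2*((1/L*gi)*(1/L*gi))) by (field; lra).
      assert (0 <= L/2*(t*t)) by (apply Rmult_le_pos; nra).
      assert (0 <= mu/2*(t*t)) by (apply Rmult_le_pos; nra).
      assert (Hl1 : lam <= - (gi * t)) by lra.
      assert (Hl2 : lam^2 <= gi^2 * t^2) by nra.
      assert (Ht : t^2 <= b k).
      { unfold b. fold x' yk. unfold norm2, inner. replace (t^2) with (vsub x' yk i * vsub x' yk i)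
          by (unfold vsub, t; rewrite Hyi; ring).
        apply (vsum_term n (fun j => vsub x' yk j * vsub x' yk j)); auto; intros; nra. }
      assert (Hg := HG k i Hi). fold yk gi in Hg.
      assert (0 <= t^2) by apply pow2_ge_0.
      nra. }
    assert (Hc : 0 < lam^2 / (G2+1)) by (apply Rdiv_lt_0_compat; nra).
    destruct (Hbcv _ Hc) as [K HK].
    assert (Hpres : forall k, (K <= k)%nat -> forall i, (i < n)%nat -> x k i = 0 -> x (S k) i = 0).
    { intros k Hk i Hi H0. destruct (Req_EM_T (x (S k) i) 0) as [E|E]; auto. exfalso.
      specialize (HT k i Hi H0 E). specialize (HK k Hk). unfold R_dist in HK.
      rewrite Rminus_0_r, Rabs_right in HK by (apply Rle_ge; auto).
      assert (G2 * b k <= G2 * (lam^2/(G2+1))) by (apply Rmult_le_compat_l; lra).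
      assert (G2 * (lam^2/(G2+1)) < lam^2).
      { replace (G2 * (lam^2/(G2+1))) with (lam^2 * (G2/(G2+1))) by (field; lra).
        assert (G2/(G2+1) < 1). { apply (Rmult_lt_reg_r (G2+1)); [lra|]. unfold Rdiv. rewrite Rmult_assoc, Rinv_l; lra. }
        assert (0 < lam^2) by nra. nra. }
      lra. }
    destruct (nat_stab (fun k => l0 n (x k)) K) as [k0 [Hk0 Hs]].
    { intros k Hk. apply l0_le. intros; apply Hpres; auto. }
    exists k0. intros k Hk i Hi.
    assert (Incl : forall k, (k0 <= k)%nat -> forall i, (i < n)%nat -> x k0 i = 0 -> x k i = 0).
    { intros k1 Hk1. induction Hk1; auto. intros j Hj Hz. apply Hpres; auto. lia. }
    split; [|apply Incl; auto].
    apply (l0_eq_incl n (x k0) (x k)); auto. symmetry. apply (Hs k Hk).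
  - set (a := fun j => norm2 n (vsub (x (S j)) (x j))).
    assert (Ha0 : forall j, 0 <= a j) by (intro; apply norm2_nonneg).
    assert (Hwb0 : 0 <= wbar) by (destruct (Hw 0%nat); lra).
    set (q := (1 + wbar)/2).
    assert (Hq : 0 < q < 1) by (unfold q; lra).
    assert (Hwq : wbar <= q) by (unfold q; lra).
    set (c := / (1 - q)).
    assert (Hc : 0 < c) by (apply Rinv_0_lt_compat; lra).
    assert (Hrec : forall k, a k <= c * b k + q * norm2 n (vsub (x k) (match k with O => x 0%nat | S j => x j end))).
    { intro k. destruct (HY k) as [_ [_ [HN _]]].
      set (P := norm2 n (vsub (x k) (match k with O => x 0%nat | S j => x j end))) in *.
      assert (HP : 0 <= P) by apply norm2_nonneg.
      assert (S1 : a k <= c * b k + / q * norm2 n (vsub (y (S k)) (x k))).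
      { unfold a, b, norm2, inner. rewrite <- !vsum_scal, <- vsum_plus. apply vsum_le; intros i _. cbv beta.
        unfold vsub, c.
        assert (SQ := sqineq (x (S k) i - y (S k) i) (y (S k) i - x k i) q Hq).
        replace (x (S k) i - y (S k) i + (y (S k) i - x k i)) with (x (S k) i - x k i) in SQ by ring.
        unfold Rdiv in SQ. simpl in SQ. rewrite !Rmult_1_r in SQ. lra. }
      assert (Hw2 : w k ^2 <= q^2) by (destruct (Hw k); nra).
      assert (S2 : norm2 n (vsub (y (S k)) (x k)) <= q^2 * P) by nra.
      assert (S3 : / q * norm2 n (vsub (y (S k)) (x k)) <= / q * (q^2 * P))
        by (apply Rmult_le_compat_l; auto; left; apply Rinv_0_lt_compat; lra).
      replace (/ q * (q^2 * P)) with (q * P) in S3 by (field; lra).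
      lra. }
    assert (Hps : forall N, sum_f_R0 a N <= c * sum_f_R0 b N + q * sum_f_R0 a N - q * a N).
    { induction N; simpl.
      - specialize (Hrec 0%nat). rewrite norm2_self in Hrec. lra.
      - specialize (Hrec (S N)). change (norm2 n (vsub (x (S N)) (x N))) with (a N) in Hrec.
        assert (E : c * (sum_f_R0 b N + b (S N)) + q * (sum_f_R0 a N + a (S N)) - q * a (S N)
                 = c * sum_f_R0 b N + q * sum_f_R0 a N + c * b (S N)) by ring.
        rewrite E. assert (Hr2 : a (S N) <= c * b (S N) + q * a N) by exact Hrec. lra. }
    set (B := 2/mu * (Hval n lam f (x 0%nat) - m)).
    assert (HbB : forall N, sum_f_R0 b N <= B).
    { intro N. eapply Rle_trans; [apply Hsum|]. apply Rmult_le_compat_l.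
      unfold Rdiv; apply Rmult_le_pos; [lra| left; apply Rinv_0_lt_compat; lra].
      specialize (HH (S N)). lra. }
    assert (Hser4 : exists s, infinite_sum a s).
    { apply (series_bounded a (c * (c * B))); auto. intro N.
      specialize (Hps N). specialize (Ha0 N). specialize (HbB N).
      assert (T1 : (1 - q) * sum_f_R0 a N <= c * B).
      { assert (c * sum_f_R0 b N <= c * B) by (apply Rmult_le_compat_l; lra).
        assert (0 <= q * a N) by nra. lra. }
      apply (Rmult_le_compat_l c) in T1; [|lra].
      replace (c * ((1 - q) * sum_f_R0 a N)) with (sum_f_R0 a N) in T1 by (unfold c; field; lra).
      auto. }
    split; [exact Hser4|].
    destruct Hser4 as [s Hs].
    exact (sqrt_cv0 a Ha0 (terms_to_0 a s Hs)).
Qed.
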